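(* Let $f,g\colon[0,2\pi)\times[0,2\pi)\to\mathbb{R}$ be given by $f(\theta_1,\theta_2)=\sin\theta_1+\sin(\theta_2-\theta_1)-\sin\theta_2$ and $g(\theta_1,\theta_2)=\cos\theta_1+\cos(\theta_2-\theta_1)+\cos\theta_2$. Then: (i) $f(\theta_1,\theta_2)\in[-\tfrac{3\sqrt3}{2},\tfrac{3\sqrt3}{2}]$ for all $\theta_1,\theta_2\in[0,2\pi)$, and $f(\theta_1,\theta_2)\in\{-\tfrac{3\sqrt3}{2},\tfrac{3\sqrt3}{2}\}$ if and only if $g(\theta_1,\theta_2)=-\tfrac32$; (ii) $f(\theta_1,\theta_1)=f(\theta_1,0)=f(0,\theta_2)=0$ for all $\theta_1,\theta_2\in[0,2\pi)$; moreover, for every $\theta_2\in(0,2\pi)$, $f(\cdot,\theta_2)>0$ on $(0,\theta_2)$ and $f(\cdot,\theta_2)<0$ on $(\theta_2,2\pi)$. *)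

(* Defs.v *)
From Stdlib Require Export Reals.
Open Scope R_scope.

Definition fF (t1 t2 : R) : R := sin t1 + sin (t2 - t1) - sin t2.
Definition gG (t1 t2 : R) : R := cos t1 + cos (t2 - t1) + cos t2.

Definition in_dom (t : R) : Prop := 0 <= t < 2 * PI.

(* Main.v *)
Require Import Defs.
From Stdlib Require Import Reals Lra Psatz.
Open Scope R_scope.

Lemma core (ss cs cd sd : R) : ss*ss+cs*cs = 1 -> sd*sd+cd*cd = 1 ->
  let F := 2*ss*cd - 2*ss*cs in let G := 2*cs*cd + 2*cs*cs - 1 in
  F*F <= 27/4 /\ (F*F = 27/4 <-> G = -(3/2)).
Proof.
  intros H1 H2 F G. unfold F, G.
  pose (k := Rabs cs).
  assert (Hk0 : 0 <= k) by apply Rabs_pos.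
  assert (Hk2 : k*k = cs*cs) by (unfold k; rewrite <- Rabs_mult, Rabs_right; nra).
  assert (Hcd : -1 <= cd <= 1) by nra.
  assert (Hm : (cd-cs)*(cd-cs) <= (1+k)*(1+k)).
  { unfold k; destruct (Rcase_abs cs); [rewrite Rabs_left|rewrite Rabs_right]; nra. }
  assert (Hp : 0 <= ss*ss) by nra.
  clearbody k. clear F G.
  assert (Hpoly : 27/16 - (1-k*k)*((1+k)*(1+k)) = (k-1/2)*(k-1/2)*(k*k+3*k+11/4)) by field.
  assert (Hq : 0 < k*k+3*k+11/4) by nra.
  assert (HF : (2*ss*cd - 2*ss*cs)*(2*ss*cd - 2*ss*cs) = 4*(ss*ss)*((cd-cs)*(cd-cs))) by ring.
  assert (Hb : ss*ss*((cd-cs)*(cd-cs)) <= (1-k*k)*((1+k)*(1+k))).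
  { replace (1-k*k) with (ss*ss) by lra. apply Rmult_le_compat_l; auto. }
  assert (Hr : 0 <= (k-1/2)*(k-1/2)*(k*k+3*k+11/4)).
  { apply Rmult_le_pos; [apply Rle_0_sqr|lra]. }
  split; [rewrite HF; lra|].
  split.
  - intro E. rewrite HF in E.
    assert (E2 : (k-1/2)*(k-1/2)*(k*k+3*k+11/4) = 0) by lra.
    apply Rmult_integral in E2. destruct E2 as [E2|E2]; [|lra].
    assert (Hk : k = 1/2) by nra.
    assert (Hss : ss*ss = 3/4) by nra.
    assert (Hm2 : (cd-cs)*(cd-cs) = 9/4) by nra.
    assert (Hcs : cs*cs = 1/4) by nra.
    assert (Hcc : -(1/2) <= cd*cs <= 1/2) by nra.
    nra.
  - intro E.
    assert (E2 : 2*(cs+cd/2)*(cs+cd/2) + sd*sd/2 = 0) by nra.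
    assert (Ha : 0 <= sd*sd) by apply Rle_0_sqr.
    assert (Hb2 : 0 <= (cs+cd/2)*(cs+cd/2)) by apply Rle_0_sqr.
    assert (Hsd : sd*sd = 0) by lra.
    assert (Hc0 : (cs+cd/2)*(cs+cd/2) = 0) by lra.
    apply Rmult_integral in Hc0. assert (Hcs : cs = -cd/2) by (destruct Hc0; lra).
    assert (Hcd2 : cd*cd = 1) by lra.
    assert (Hss : ss*ss = 3/4) by (subst cs; nra).
    rewrite HF, Hss. subst cs.
    replace ((cd - - cd/2)*(cd - - cd/2)) with (9/4*(cd*cd)) by field.
    rewrite Hcd2. field.
Qed.

Lemma half_fg (S D : R) :
  fF (S+D) (2*S) = 2*sin S*cos D - 2*sin S*cos S /\
  gG (S+D) (2*S) = 2*cos S*cos D + 2*cos S*cos S - 1.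
Proof.
  unfold fF, gG.
  replace (2*S - (S+D)) with (S - D) by ring.
  replace (2*S) with (S + S) by ring.
  rewrite !sin_plus, !cos_plus, sin_minus, cos_minus.
  pose proof (sin2_cos2 S) as H. unfold Rsqr in H.
  split; nra.
Qed.

Lemma part_i (t1 t2 : R) :
  - (3 * sqrt 3 / 2) <= fF t1 t2 <= 3 * sqrt 3 / 2 /\
     ((fF t1 t2 = - (3 * sqrt 3 / 2) \/ fF t1 t2 = 3 * sqrt 3 / 2)
        <-> gG t1 t2 = - (3 / 2)).
Proof.
  destruct (half_fg (t2/2) (t1 - t2/2)) as [Hf Hg].
  replace (t2/2 + (t1 - t2/2)) with t1 in Hf, Hg by field.
  replace (2*(t2/2)) with t2 in Hf, Hg by field.
  rewrite Hf, Hg.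
  pose proof (sin2_cos2 (t2/2)) as H1. pose proof (sin2_cos2 (t1 - t2/2)) as H2.
  unfold Rsqr in H1, H2.
  destruct (core (sin (t2/2)) (cos (t2/2)) (cos (t1-t2/2)) (sin (t1-t2/2))) as [A B]; [lra|lra|].
  set (F := 2 * sin (t2 / 2) * cos (t1 - t2 / 2) - 2 * sin (t2 / 2) * cos (t2 / 2)) in *.
  set (G := 2 * cos (t2 / 2) * cos (t1 - t2 / 2) + 2 * cos (t2 / 2) * cos (t2 / 2) - 1) in *.
  clearbody F G.
  assert (Hs3 : sqrt 3 * sqrt 3 = 3) by (apply sqrt_sqrt; lra).
  assert (Hs0 : 0 <= sqrt 3) by apply sqrt_pos.
  set (M := 3 * sqrt 3 / 2).
  assert (HM : M*M = 27/4) by (unfold M; nra).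
  assert (HM0 : 0 <= M) by (unfold M; lra).
  clearbody M.
  split.
  { split; destruct (Rle_or_lt (-M) F); destruct (Rle_or_lt F M); try lra;
    first [ assert (0 < (-(F+M))*(M-F)) by (apply Rmult_lt_0_compat; lra); nra
          | assert (0 < (F-M)*(F+M)) by (apply Rmult_lt_0_compat; lra); nra ]. }
  rewrite <- B. split.
  - intros [E|E]; subst F; nra.
  - intro E. assert (E2 : (F - M)*(F+M) = 0) by nra.
    apply Rmult_integral in E2. destruct E2; [right|left]; lra.
Qed.

Lemma half_prod0 (x y : R) :
  sin (2*x) + sin (2*(y-x)) - sin (2*y) = 4 * sin x * sin y * sin (y - x).
Proof.
  rewrite !sin_2a, sin_minus, cos_minus.
  pose proof (sin2_cos2 x) as H1. pose proof (sin2_cos2 y) as H2.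
  unfold Rsqr in H1, H2.
  set (sx := sin x) in *. set (cx := cos x) in *. set (sy := sin y) in *. set (cy := cos y) in *.
  transitivity (4 * sx * sy * (sy * cx - cy * sx) + 2*sx*cx*(1 - (sy*sy+cy*cy)) + 2*sy*cy*((sx*sx+cx*cx)-1)).
  - ring.
  - rewrite H1, H2. ring.
Qed.

Lemma half_prod (t1 t2 : R) :
  fF t1 t2 = 4 * sin (t1/2) * sin (t2/2) * sin ((t2 - t1)/2).
Proof.
  unfold fF. replace ((t2-t1)/2) with (t2/2 - t1/2) by field.
  rewrite <- (half_prod0 (t1/2) (t2/2)).
  replace (2*(t1/2)) with t1 by field.
  replace (2*(t2/2)) with t2 by field.
  replace (2*(t2/2 - t1/2)) with (t2-t1) by field.
  reflexivity.
Qed.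

Theorem lemma2p1 :
  (* (i) *)
  (forall t1 t2 : R, in_dom t1 -> in_dom t2 ->
     - (3 * sqrt 3 / 2) <= fF t1 t2 <= 3 * sqrt 3 / 2 /\
     ((fF t1 t2 = - (3 * sqrt 3 / 2) \/ fF t1 t2 = 3 * sqrt 3 / 2)
        <-> gG t1 t2 = - (3 / 2))) /\
  (* (ii) *)
  (forall t1 t2 : R, in_dom t1 -> in_dom t2 ->
     fF t1 t1 = 0 /\ fF t1 0 = 0 /\ fF 0 t2 = 0) /\
  (forall t2 : R, 0 < t2 < 2 * PI ->
     (forall t1 : R, 0 < t1 < t2 -> fF t1 t2 > 0) /\
     (forall t1 : R, t2 < t1 < 2 * PI -> fF t1 t2 < 0)).
Proof.
  split; [intros; apply part_i|].
  split.
  - intros t1 t2 _ _. unfold fF.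
    replace (t1 - t1) with 0 by ring. replace (0 - t1) with (-t1) by ring.
    replace (t2 - 0) with t2 by ring.
    rewrite sin_0, sin_neg. repeat split; ring.
  - intros t2 Ht2. split; intros t1 Ht1; rewrite half_prod.
    + assert (A1 : 0 < sin (t1/2)) by (apply sin_gt_0; lra).
      assert (A2 : 0 < sin (t2/2)) by (apply sin_gt_0; lra).
      assert (A3 : 0 < sin ((t2-t1)/2)) by (apply sin_gt_0; lra).
      apply Rlt_gt. repeat apply Rmult_lt_0_compat; lra.
    + assert (A1 : 0 < sin (t1/2)) by (apply sin_gt_0; lra).
      assert (A2 : 0 < sin (t2/2)) by (apply sin_gt_0; lra).
      assert (A3 : 0 < sin ((t1-t2)/2)) by (apply sin_gt_0; lra).
      replace ((t2-t1)/2) with (-((t1-t2)/2)) by field. rewrite sin_neg.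
      assert (0 < 4 * sin (t1/2) * sin (t2/2)) by (repeat apply Rmult_lt_0_compat; lra).
      nra.
Qed.
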